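(* For the encryption channel $\mathcal E$ described in the context, every (possibly computationally unbounded) quantum adversary $\mathcal A$ in the qIND–qCPA experiment has advantage exactly $0$: \[ \big|\Pr[b'=1\mid b=1]-\Pr[b'=1\mid b=0]\big|=0 . \]
   Context: Fix integers $d_1\ge d_2\ge1$ and $\eta\in\mathbb Z^+$. Let $\mathcal H_M=(\mathbb C^2)^{\otimes d_1}$, $\mathcal H_{M_c}=(\mathbb C^2)^{\otimes d_2}$, $U_k=\bigotimes_jX^{k_{2j-1}}Z^{k_{2j}}$ (Pauli $X,Z$) and $V:\mathcal H_{M_c}\to\mathcal H_M$, $V|\psi\rangle=|\psi\rangle\otimes|0\rangle^{\otimes(d_1-d_2)}$. For a state $\rho$ on message registers $M_oM_c$ (spaces $\mathcal H_M\otimes\mathcal H_{M_c}$) with marginals $\rho_{M_o},\rho_{M_c}$ and keys $k\in\{0,1\}^{2d_1}$, $k'\in\{0,1\}^{2d_2}$, let $A=\frac12U_k\rho_{M_o}U_k^\dagger$, $B=\frac1\eta VU_{k'}\rho_{M_c}U_{k'}^\dagger V^\dagger$ and $M_a(\rho;k,k')=|0\rangle\langle0|\otimes A+|0\rangle\langle1|\otimes B+|1\rangle\langle0|\otimes B^\dagger+|1\rangle\langle1|\otimes A$ on the ciphertext register $RM=\mathbb C^2\otimes\mathcal H_M$. The encryption channel is $\mathcal E(\rho)=\mathbb E_{k,k',\sigma}\big[U_\sigma M_a(\rho;k,k')U_\sigma^\dagger\big]$, with $k,k'$ uniform and $\sigma$ uniform in $\mathrm{Sym}(2^{d_1+1})$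 ($U_\sigma$ its permutation matrix), sampled freshly at every use; on inputs entangled with an adversary memory $E$ it acts as $\mathrm{id}_E\otimes\mathcal E$ and consumes the message registers. qIND–qCPA experiment: the adversary starts with an arbitrary state on a finite-dimensional memory $E$ and may adaptively query $\mathcal E$ on inputs of its choice (possibly entangled with $E$); it then outputs two pairs $(M_o^{(0)},M_c^{(0)})$, $(M_o^{(1)},M_c^{(1)})$ of density operators of matching dimensions; the challenger picks a uniform bit $b$ and returns $\mathcal E(M_o^{(b)}\otimes M_c^{(b)})$; the adversary may make further queries and finally outputs a bit $b'$. *)

(* Defs.v *)
From HB Require Import structures.
From mathcomp Require Import all_boot all_order all_algebra all_fingroup.
From mathcomp Require Import mxtens.
Set Implicit Arguments. Unset Strict Implicit. Unset Printing Implicit Defensive.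
Import Order.TTheory GRing.Theory Num.Theory.
Local Open Scope ring_scope.

Section Quantum.
Variable C : numClosedFieldType.

Definition adj m n (A : 'M[C]_(m, n)) : 'M[C]_(n, m) := (map_mx Num.conj A)^T.

Definition psd n (A : 'M[C]_n) : Prop :=
  forall v : 'cV[C]_n, 0 <= ((adj v) *m A *m v) 0 0.
Definition density n (rho : 'M[C]_n) : Prop := psd rho /\ \tr rho = 1.

Definition kapply m n (ks : seq 'M[C]_(m, n)) (rho : 'M[C]_n) : 'M[C]_m :=
  \sum_(K <- ks) K *m rho *m adj K.
Definition trace_pres m n (ks : seq 'M[C]_(m, n)) : Prop :=
  \sum_(K <- ks) adj K *m K = 1%:M.

Definition ket n (j : 'I_n) : 'cV[C]_n := delta_mx j 0.

Definition ptrace2 m n (rho : 'M[C]_(m * n)) : 'M[C]_m :=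
  castmx (muln1 m, muln1 m)
   (\sum_(j < n) ((1%:M : 'M[C]_m) *t (ket j)^T) *m rho *m ((1%:M : 'M[C]_m) *t ket j)).
Definition ptrace1 m n (rho : 'M[C]_(m * n)) : 'M[C]_n :=
  castmx (mul1n n, mul1n n)
   (\sum_(i < m) ((ket i)^T *t (1%:M : 'M[C]_n)) *m rho *m (ket i *t (1%:M : 'M[C]_n))).

(* single-qubit Paulis and U_k = (x)_j X^{k_{2j-1}} Z^{k_{2j}} (first qubit leftmost) *)
Definition pauliX : 'M[C]_2 := \matrix_(i, j) (i != j)%:R.
Definition pauliZ : 'M[C]_2 := \matrix_(i, j) ((i == j)%:R * (if i == 0 then 1 else -1)).
Definition pauli1 (a b : bool) : 'M[C]_2 :=
  (if a then pauliX else 1%:M) *m (if b then pauliZ else 1%:M).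

Fixpoint pauliU (d : nat) : (nat -> bool) -> 'M[C]_(2 ^ d) :=
  match d return (nat -> bool) -> 'M[C]_(2 ^ d) with
  | 0 => fun _ => 1%:M
  | d'.+1 => fun k => castmx (esym (expnS 2 d'), esym (expnS 2 d'))
                       (pauli1 (k 0%N) (k 1%N) *t pauliU d' (fun i => k i.+2))
  end.

(* U_k for a key k in {0,1}^{2d}; k_{2j-1}, k_{2j} (1-based) are nth (2j-2), nth (2j-1) *)
Definition Ukey d (k : (2 * d).-tuple bool) : 'M[C]_(2 ^ d) := pauliU d (nth false k).

Fixpoint ket0s (n : nat) : 'cV[C]_(2 ^ n) :=
  match n return 'cV[C]_(2 ^ n) with
  | 0 => 1%:M
  | n'.+1 => castmx (esym (expnS 2 n'), muln1 1) (ket (0 : 'I_2) *t ket0s n')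
  end.

Lemma dimV d1 d2 : (d2 <= d1)%N -> (2 ^ d2 * 2 ^ (d1 - d2) = 2 ^ d1)%N.
Proof. by move=> h; rewrite -expnD subnKC. Qed.

Definition Vmx d1 d2 (h : (d2 <= d1)%N) : 'M[C]_(2 ^ d1, 2 ^ d2) :=
  castmx (dimV h, muln1 _) ((1%:M : 'M[C]_(2 ^ d2)) *t ket0s (d1 - d2)).

Definition E2 (a b : 'I_2) : 'M[C]_2 := delta_mx a b.

Definition Ma d1 d2 (h : (d2 <= d1)%N) (eta : nat) (rho : 'M[C]_(2 ^ d1 * 2 ^ d2))
   (k : (2 * d1).-tuple bool) (k' : (2 * d2).-tuple bool) : 'M[C]_(2 ^ d1.+1) :=
  let A := 2^-1 *: (Ukey k *m ptrace2 rho *m adj (Ukey k)) in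
  let B := eta%:R^-1 *: (Vmx h *m Ukey k' *m ptrace1 rho *m adj (Ukey k') *m adj (Vmx h)) in
  castmx (esym (expnS 2 d1), esym (expnS 2 d1))
   (E2 0 0 *t A + E2 0 1 *t B + E2 1 0 *t adj B + E2 1 1 *t A).

(* E(rho) = E_{k,k',sigma} [U_sigma M_a U_sigma^dagger], for (Hermitian) rho *)
Definition Enc d1 d2 (h : (d2 <= d1)%N) (eta : nat) (rho : 'M[C]_(2 ^ d1 * 2 ^ d2))
   : 'M[C]_(2 ^ d1.+1) :=
  (#|{:(2 * d1).-tuple bool}|%:R * #|{:(2 * d2).-tuple bool}|%:R
     * #|{:'S_(2 ^ d1.+1)}|%:R)^-1 *:
  \sum_(k : (2 * d1).-tuple bool) \sum_(k' : (2 * d2).-tuple bool)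
   \sum_(s : 'S_(2 ^ d1.+1))
     (perm_mx s *m Ma h eta rho k k' *m adj (perm_mx s)).

(* the unique C-linear extension of E from Hermitian operators to all operators *)
Definition Enc_lin d1 d2 (h : (d2 <= d1)%N) (eta : nat) (X : 'M[C]_(2 ^ d1 * 2 ^ d2))
   : 'M[C]_(2 ^ d1.+1) :=
  Enc h eta (2^-1 *: (X + adj X)) + 'i *: Enc h eta ((2 * 'i)^-1 *: (X - adj X)).

Definition block e n (rho : 'M[C]_(e * n)) (a b : 'I_e) : 'M[C]_n :=
  castmx (mul1n n, mul1n n) (((ket a)^T *t (1%:M : 'M[C]_n)) *m rho *m (ket b *t (1%:M : 'M[C]_n))).

Definition idEnc d1 d2 (h : (d2 <= d1)%N) (eta : nat) e
   (rho : 'M[C]_(e * (2 ^ d1 * 2 ^ d2))) : 'M[C]_(e * 2 ^ d1.+1) :=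
  \sum_(a < e) \sum_(b < e) ((delta_mx a b : 'M[C]_e) *t Enc_lin h eta (block rho a b)).


(* Adversary with a finite-dimensional workspace of dimension adv_D (WLOG fixed:
   any finite family of dimensions can be padded to a common one).
   A query round: a channel memory -> memory (x) (M_o M_c), the oracle id (x) E,
   then a channel memory (x) ciphertext -> memory.
   Challenge: a quantum instrument on the memory with outcome j in adv_J,
   on outcome j the two pairs of density operators (Mo0 j, Mc0 j), (Mo1 j, Mc1 j)
   are output; the challenge ciphertext E(Mo^(b) (x) Mc^(b)) is handed to the
   adversary, who processes it with a channel, makes further queries and finally
   measures a two-outcome POVM {F, 1 - F}, F corresponding to b' = 1. *)
Record adversary (d1 d2 : nat) := Adversary {
  adv_D : nat;
  adv_init : 'M[C]_adv_D;
  adv_pre : seq (seq 'M[C]_(adv_D * (2 ^ d1 * 2 ^ d2), adv_D)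
                 * seq 'M[C]_(adv_D, adv_D * 2 ^ d1.+1));
  adv_J : finType;
  adv_inst : adv_J -> seq 'M[C]_adv_D;
  adv_Mo0 : adv_J -> 'M[C]_(2 ^ d1);
  adv_Mc0 : adv_J -> 'M[C]_(2 ^ d2);
  adv_Mo1 : adv_J -> 'M[C]_(2 ^ d1);
  adv_Mc1 : adv_J -> 'M[C]_(2 ^ d2);
  adv_chal : seq 'M[C]_(adv_D, adv_D * 2 ^ d1.+1);
  adv_post : seq (seq 'M[C]_(adv_D * (2 ^ d1 * 2 ^ d2), adv_D)
                  * seq 'M[C]_(adv_D, adv_D * 2 ^ d1.+1));
  adv_F : 'M[C]_adv_D }.
Arguments adv_inst {d1 d2} a _.
Arguments adv_Mo0 {d1 d2} a _.
Arguments adv_Mc0 {d1 d2} a _.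
Arguments adv_Mo1 {d1 d2} a _.
Arguments adv_Mc1 {d1 d2} a _.

Definition valid_adversary d1 d2 (A : adversary d1 d2) : Prop :=
  [/\ density (adv_init A),
      (forall r, r \in adv_pre A -> trace_pres r.1 /\ trace_pres r.2)
      /\ (forall r, r \in adv_post A -> trace_pres r.1 /\ trace_pres r.2),
      \sum_(j : adv_J A) \sum_(K <- adv_inst A j) adj K *m K = 1%:M,
      (forall j, [/\ density (adv_Mo0 A j), density (adv_Mc0 A j),
                    density (adv_Mo1 A j) & density (adv_Mc1 A j)])
    & trace_pres (adv_chal A) /\ psd (adv_F A) /\ psd (1%:M - adv_F A)].

Definition run_rounds d1 d2 (h : (d2 <= d1)%N) (eta : nat) (D : nat)
   (rs : seq (seq 'M[C]_(D * (2 ^ d1 * 2 ^ d2), D) * seq 'M[C]_(D, D * 2 ^ d1.+1)))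
   (rho : 'M[C]_D) : 'M[C]_D :=
  foldl (fun r rd => kapply rd.2 (idEnc h eta (kapply rd.1 r))) rho rs.

Definition qcpa_prob d1 d2 (h : (d2 <= d1)%N) (eta : nat) (A : adversary d1 d2)
   (b : bool) : C :=
  let rho1 := run_rounds h eta (adv_pre A) (adv_init A) in
  let rho2 := \sum_(j : adv_J A)
      (kapply (adv_inst A j) rho1 *t
       Enc h eta ((if b then adv_Mo1 A j else adv_Mo0 A j)
                  *t (if b then adv_Mc1 A j else adv_Mc0 A j))) in
  let rho3 := run_rounds h eta (adv_post A) (kapply (adv_chal A) rho2) in
  \tr (adv_F A *m rho3).

End Quantum.

(* Main.v *)
Require Import Defs.
From HB Require Import structures.
From mathcomp Require Import all_boot all_order all_algebra all_fingroup.
From mathcomp Require Import mxtens.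
From mathcomp Require Import ring.
Set Implicit Arguments. Unset Strict Implicit. Unset Printing Implicit Defensive.
Import Order.TTheory GRing.Theory Num.Theory.
Local Open Scope ring_scope.

Section H.
Variable C : numClosedFieldType.

Lemma adjM m n p (A : 'M[C]_(m, n)) (B : 'M[C]_(n, p)) : adj (A *m B) = adj B *m adj A.
Proof. by rewrite /adj map_mxM trmx_mul. Qed.

Lemma adjD m n (A B : 'M[C]_(m, n)) : adj (A + B) = adj A + adj B.
Proof. by rewrite /adj map_mxD linearD. Qed.

Lemma adjZ m n (c : C) (A : 'M[C]_(m, n)) : adj (c *: A) = c^* *: adj A.
Proof. by rewrite /adj map_mxZ linearZ. Qed.

Lemma adj_sum m n (I : finType) (F : I -> 'M[C]_(m, n)) :
  adj (\sum_i F i) = \sum_i adj (F i).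
Proof.
by apply/matrixP => i j; rewrite /adj !mxE !summxE rmorph_sum; apply: eq_bigr => k _; rewrite !mxE.
Qed.

Lemma adj_scalar n (c : C) : adj (c%:M : 'M[C]_n) = (c^*)%:M.
Proof. by apply/matrixP => i j; rewrite /adj !mxE rmorphMn eq_sym. Qed.

Lemma adj_tens m n p q (A : 'M[C]_(m, n)) (B : 'M[C]_(p, q)) : adj (A *t B) = adj A *t adj B.
Proof. by rewrite /adj map_mxT trmx_tens. Qed.

Lemma adj_cast m n m' n' (e1 : m = m') (e2 : n = n') (A : 'M[C]_(m, n)) :
  adj (castmx (e1, e2) A) = castmx (e2, e1) (adj A).
Proof. by case: m' / e1; case: n' / e2; rewrite !castmx_id. Qed.

Lemma cast_mulmx3 m m' (e : m = m') (A B D : 'M[C]_m) :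
  castmx (e, e) A *m castmx (e, e) B *m castmx (e, e) D = castmx (e, e) (A *m B *m D).
Proof. by case: m' / e; rewrite !castmx_id. Qed.

Lemma cast_scalar m m' (e : m = m') (c : C) : castmx (e, e) (c%:M : 'M[C]_m) = c%:M.
Proof. by case: m' / e; rewrite castmx_id. Qed.

Lemma cast_sum m n m' n' (e1 : m = m') (e2 : n = n') (I : finType) (F : I -> 'M[C]_(m, n)) :
  castmx (e1, e2) (\sum_i F i) = \sum_i castmx (e1, e2) (F i).
Proof. by case: m' / e1; case: n' / e2; rewrite castmx_id; apply: eq_bigr => i _; rewrite castmx_id. Qed.

Lemma cast_add m n m' n' (e1 : m = m') (e2 : n = n') (A B : 'M[C]_(m, n)) :
  castmx (e1, e2) (A + B) = castmx (e1, e2) A + castmx (e1, e2) B.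
Proof. by case: m' / e1; case: n' / e2; rewrite !castmx_id. Qed.

Lemma tr_cast m m' (e : m = m') (A : 'M[C]_m) : \tr (castmx (e, e) A) = \tr A.
Proof. by case: m' / e; rewrite castmx_id. Qed.

Lemma tensmx_suml m n p q (I : finType) (F : I -> 'M[C]_(m, n)) (B : 'M[C]_(p, q)) :
  (\sum_i F i) *t B = \sum_i (F i *t B).
Proof.
apply/matrixP => i j; rewrite !mxE !summxE mulr_suml; apply: eq_bigr => k _; by rewrite !mxE.
Qed.

Lemma tensmx_sumr m n p q (I : finType) (A : 'M[C]_(m, n)) (F : I -> 'M[C]_(p, q)) :
  A *t (\sum_i F i) = \sum_i (A *t F i).
Proof.
apply/matrixP => i j; rewrite !mxE !summxE mulr_sumr; apply: eq_bigr => k _; by rewrite !mxE.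
Qed.

Lemma tensmx_scalar m n (a b : C) : (a%:M : 'M[C]_m) *t (b%:M : 'M[C]_n) = (a * b)%:M.
Proof.
apply/matrixP => i j.
case: (mxtens_indexP i) => i1 i2; case: (mxtens_indexP j) => j1 j2.
rewrite tensmxE !mxE (can_eq (@mxtens_indexK _ _)) xpair_eqE.
by case: (i1 == j1); case: (i2 == j2); rewrite /= ?mulr1n ?mulr0n ?mulr0 ?mul0r.
Qed.

Lemma tr_tens m n (A : 'M[C]_m) (B : 'M[C]_n) : \tr (A *t B) = \tr A * \tr B.
Proof. by rewrite /mxtrace mulr_sum; apply: eq_bigr => k _; rewrite !mxE. Qed.

Lemma delta_tens m n (p1 q1 : 'I_m) (p2 q2 : 'I_n) :
  delta_mx (mxtens_index (p1, p2)) (mxtens_index (q1, q2)) =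
  (delta_mx p1 q1 : 'M[C]_m) *t (delta_mx p2 q2 : 'M[C]_n).
Proof.
apply/matrixP => i j.
case: (mxtens_indexP i) => i1 i2; case: (mxtens_indexP j) => j1 j2.
rewrite tensmxE !mxE !(can_eq (@mxtens_indexK _ _)) !xpair_eqE.
by rewrite -natrM mulnb andbACA.
Qed.

Lemma tr_delta n (p q : 'I_n) : \tr (delta_mx p q : 'M[C]_n) = (p == q)%:R.
Proof.
rewrite /mxtrace (bigD1 p) //= big1 ?addr0; first by rewrite mxE eqxx /= eq_sym.
by move=> i /negbTE ne; rewrite mxE ne.
Qed.


Lemma sand_lin (I : finType) m n (L : I -> 'M[C]_(m,n)) (R : I -> 'M[C]_(n,m)) (Q : 'M[C]_n) :
  \sum_i L i *m Q *m R i = \sum_p \sum_q Q p q *: \sum_i L i *m delta_mx p q *m R i.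
Proof.
rewrite {1}[Q]matrix_sum_delta.
under eq_bigr do rewrite mulmx_sumr mulmx_suml.
rewrite exchange_big; apply: eq_bigr => p _.
under eq_bigr do rewrite mulmx_sumr mulmx_suml.
rewrite exchange_big; apply: eq_bigr => q _.
rewrite scaler_sumr; apply: eq_bigr => i _.
by rewrite -!scalemxAr !scalemxAl.
Qed.

Lemma sum_scalar n (I : finType) (F : I -> C) : \sum_i (F i)%:M = (\sum_i F i)%:M :> 'M[C]_n.
Proof. by rewrite raddf_sum. Qed.

Lemma twirl_tens m n (I J : finType) (X : I -> 'M[C]_m) (Y : J -> 'M[C]_n) c1 c2 :
 (forall A, \sum_i X i *m A *m adj (X i) = (c1 * \tr A)%:M) ->
 (forall B, \sum_j Y j *m B *m adj (Y j) = (c2 * \tr B)%:M) ->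
 forall Q : 'M[C]_(m*n),
  \sum_i \sum_j (X i *t Y j) *m Q *m adj (X i *t Y j) = (c1 * c2 * \tr Q)%:M.
Proof.
move=> hX hY Q.
rewrite pair_big /= sand_lin.
have key : forall p q : 'I_(m * n),
  \sum_(i : I * J) (X i.1 *t Y i.2) *m delta_mx p q *m adj (X i.1 *t Y i.2)
  = (c1 * c2 * (p == q)%:R)%:M.
  move=> p q.
  case: (mxtens_indexP p) => p1 p2; case: (mxtens_indexP q) => q1 q2.
  rewrite delta_tens.
  under eq_bigr do rewrite adj_tens !tensmx_mul.
  rewrite -(pair_big predT predT (fun i j => (X i *m delta_mx p1 q1 *m adj (X i)) *t (Y j *m delta_mx p2 q2 *m adj (Y j)))) /=.
  under eq_bigr do rewrite -tensmx_sumr.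
  rewrite -tensmx_suml hX hY tensmx_scalar !tr_delta (can_eq (@mxtens_indexK _ _)) xpair_eqE.
  by rewrite -mulnb natrM mulrACA.
under eq_bigr do under eq_bigr do rewrite key scale_scalar_mx.
under eq_bigr do rewrite sum_scalar.
rewrite sum_scalar /mxtrace mulr_sumr; congr (_%:M); apply: eq_bigr => p _.
rewrite (bigD1 p) //= big1 ?addr0; first by rewrite eqxx mulr1 mulrC.
by move=> q /negbTE; rewrite eq_sym => ->; rewrite mulr0 mulr0.
Qed.


Lemma twirl1 (A : 'M[C]_2) :
  \sum_(ab : bool * bool) pauli1 C ab.1 ab.2 *m A *m adj (pauli1 C ab.1 ab.2) = (2%:R * \tr A)%:M.
Proof.
rewrite -(pair_big predT predT (fun a b => pauli1 C a b *m A *m adj (pauli1 C a b))) /= !big_bool /=.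
apply/matrixP => i j.
rewrite /adj /pauli1 /pauliX /pauliZ /mxtrace.
rewrite !mul1mx !mulmx1 !map_mx1 !trmx1 !mulmx1.
rewrite !(mxE, big_ord_recr, big_ord0) /=.
have w0 : widen_ord (leqnSn 1) ord_max = (0 : 'I_2) by apply: val_inj.
have o0 : forall h : (0 < 2)%N, Ordinal h = 0 :> 'I_2 by move=> h; apply: val_inj.
have o1 : forall h : (1 < 2)%N, Ordinal h = ord_max :> 'I_2 by move=> h; apply: val_inj.
case: i => [[|[|//]] ?]; case: j => [[|[|//]] ?]; rewrite /= ?(rmorph0, rmorph1, rmorphN1, mulr0, mul0r, mulr1, mul1r, add0r, addr0, mulr1n, mulr0n) ?w0 ?o0 ?o1; ring.
Qed.


Lemma sum_tuple_cons (T : finType) n p q (G : (n.+1).-tuple T -> 'M[C]_(p, q)) :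
  \sum_k G k = \sum_a \sum_(t : n.-tuple T) G [tuple of a :: t].
Proof.
rewrite pair_big /=.
rewrite (reindex (fun pt : T * n.-tuple T => [tuple of pt.1 :: pt.2])) //=.
exists (fun k => (thead k, [tuple of behead k])) => [[a t] _ | k _] /=.
  by rewrite theadE; congr pair; apply: val_inj.
by rewrite -tuple_eta.
Qed.

Lemma sum_tuple_cast n m (e : n = m) p q (F : (nat -> bool) -> 'M[C]_(p, q)) :
  \sum_(k : n.-tuple bool) F (nth false k) = \sum_(k : m.-tuple bool) F (nth false k).
Proof. by case: m / e. Qed.

Lemma twirlU d (P : 'M[C]_(2 ^ d)) :
  \sum_(k : (2 * d).-tuple bool) pauliU C d (nth false k) *m P *m adj (pauliU C d (nth false k))
  = ((2 ^ d)%:R * \tr P)%:M.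
Proof.
elim: d P => [|d IH] P.
  rewrite (eq_bigr (fun _ => P)); last first.
    move=> k _; change (1%:M *m P *m adj (1%:M : 'M[C]_1) = P).
    by rewrite adj_scalar conjC1 mul1mx mulmx1.
  rewrite sumr_const card_tuple; change (P *+ 1 = ((1%N)%:R * \tr P)%:M); rewrite mulr1n mul1r.
  by rewrite [LHS]mx11_scalar /mxtrace big_ord1.
have e : (2 * d.+1 = (2 * d).+2)%N by rewrite mulnS.
rewrite (sum_tuple_cast e (fun f => pauliU C d.+1 f *m P *m adj (pauliU C d.+1 f))).
rewrite sum_tuple_cons.
under eq_bigr do rewrite sum_tuple_cons.
rewrite (pair_big predT predT (fun a b => \sum_(t : (2 * d).-tuple bool) pauliU C d.+1 (nth false [tuple of a :: [tuple of b :: t]]) *m P *m adj (pauliU C d.+1 (nth false [tuple of a :: [tuple of b :: t]])))) /=.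
set ee := esym (expnS 2 d).
have -> : P = castmx (ee, ee) (castmx (esym ee, esym ee) P) by rewrite castmxKV.
under eq_bigr do under eq_bigr do rewrite [pauliU _ _ _]/= adj_cast cast_mulmx3.
under eq_bigr do rewrite -cast_sum.
rewrite -cast_sum (twirl_tens twirl1 IH) cast_scalar !tr_cast; congr (_%:M); congr (_ * _); by rewrite expnS natrM.
Qed.


Lemma sum_delta_diag n : \sum_(j < n) (delta_mx j j : 'M[C]_n) = 1%:M.
Proof.
apply/matrixP => i k; rewrite summxE !mxE (bigD1 i) //= big1 ?addr0.
  by rewrite !mxE eqxx /= eq_sym.
by move=> j /negbTE ne; rewrite mxE eq_sym ne.
Qed.

Lemma tr_ptrace2 m n (Z : 'M[C]_(m * n)) : \tr (ptrace2 Z) = \tr Z.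
Proof.
rewrite /ptrace2 tr_cast raddf_sum /=.
under eq_bigr do rewrite mxtrace_mulC mulmxA tensmx_mul mul1mx /ket trmx_delta mul_delta_mx.
rewrite -raddf_sum /= -mulmx_suml -tensmx_sumr sum_delta_diag tensmx_scalar mulr1.
by rewrite mul1mx.
Qed.

Lemma tr_ptrace1 m n (Z : 'M[C]_(m * n)) : \tr (ptrace1 Z) = \tr Z.
Proof.
rewrite /ptrace1 tr_cast raddf_sum /=.
under eq_bigr do rewrite mxtrace_mulC mulmxA tensmx_mul mul1mx /ket trmx_delta mul_delta_mx.
rewrite -raddf_sum /= -mulmx_suml -tensmx_suml sum_delta_diag tensmx_scalar mulr1.
by rewrite mul1mx.
Qed.


Lemma twirl_Ukey d (P Q : 'M[C]_(2 ^ d)) : \tr P = \tr Q ->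
  \sum_(k : (2 * d).-tuple bool) Ukey C k *m P *m adj (Ukey C k)
  = \sum_(k : (2 * d).-tuple bool) Ukey C k *m Q *m adj (Ukey C k).
Proof. by move=> e; rewrite /Ukey !twirlU e. Qed.

Lemma LA (K K' : finType) p q m n (E : 'M[C]_(p, q)) (F : K -> 'M[C]_(m, n)) :
  \sum_(k : K) \sum_(k' : K') E *t F k = \sum_(k' : K') E *t \sum_(k : K) F k.
Proof. by rewrite exchange_big; apply: eq_bigr => k' _; rewrite tensmx_sumr. Qed.

Lemma LB (K K' : finType) p q m n (E : 'M[C]_(p, q)) (G : K' -> 'M[C]_(m, n)) :
  \sum_(k : K) \sum_(k' : K') E *t G k' = \sum_(k : K) E *t \sum_(k' : K') G k'.
Proof. by apply: eq_bigr => k _; rewrite tensmx_sumr. Qed.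

Lemma HB (K : finType) a b (V : 'M[C]_(a, b)) (U : K -> 'M[C]_b) (P : 'M[C]_b) :
  \sum_k (V *m U k *m P *m adj (U k) *m adj V) = V *m (\sum_k U k *m P *m adj (U k)) *m adj V.
Proof. by rewrite mulmx_sumr mulmx_suml; apply: eq_bigr => k _; rewrite !mulmxA. Qed.

Lemma Enc_eq d1 d2 (h : (d2 <= d1)%N) eta (X Y : 'M[C]_(2 ^ d1 * 2 ^ d2)) :
  \tr X = \tr Y -> Enc h eta X = Enc h eta Y.
Proof.
move=> eXY; rewrite /Enc; congr (_ *: _).
have G : forall Z : 'M[C]_(2 ^ d1 * 2 ^ d2),
  \sum_(k : (2 * d1).-tuple bool) \sum_(k' : (2 * d2).-tuple bool) \sum_(s : 'S_(2 ^ d1.+1))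
     perm_mx s *m Ma h eta Z k k' *m adj (perm_mx s)
  = \sum_(s : 'S_(2 ^ d1.+1)) perm_mx s *m (\sum_(k : (2 * d1).-tuple bool) \sum_(k' : (2 * d2).-tuple bool) Ma h eta Z k k') *m adj (perm_mx s).
  move=> Z.
  under [RHS]eq_bigr do rewrite mulmx_sumr mulmx_suml.
  rewrite [RHS]exchange_big; apply: eq_bigr => k _.
  under [RHS]eq_bigr do rewrite mulmx_sumr mulmx_suml.
  by rewrite [RHS]exchange_big.
rewrite !G; apply: eq_bigr => s _; congr (_ *m _ *m _).
rewrite /Ma /=.
under eq_bigr do rewrite -cast_sum.
under [RHS]eq_bigr do rewrite -cast_sum.
rewrite -!cast_sum; congr castmx.
under eq_bigr do rewrite !big_split.
under [RHS]eq_bigr do rewrite !big_split.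
rewrite !big_split /=.
have hA : \tr (ptrace2 X) = \tr (ptrace2 Y) by rewrite !tr_ptrace2.
have hB : \tr (ptrace1 X) = \tr (ptrace1 Y) by rewrite !tr_ptrace1.
have SA := twirl_Ukey hA.
have SB := twirl_Ukey hB.
rewrite !LA !LB -!adj_sum -!scaler_sumr !HB SA SB.
done.
Qed.

End H.
Theorem theorem16 (C : numClosedFieldType) (d1 d2 eta : nat)
  (h : (d2 <= d1)%N) (hd2 : (1 <= d2)%N) (heta : (0 < eta)%N)
  (A : adversary C d1 d2) :
  valid_adversary A ->
  `|qcpa_prob h eta A true - qcpa_prob h eta A false| = 0.
Proof.
move=> [_ _ _ hd _].
have E : forall j, Enc h eta (@adv_Mo1 C d1 d2 A j *t @adv_Mc1 C d1 d2 A j) = Enc h eta (@adv_Mo0 C d1 d2 A j *t @adv_Mc0 C d1 d2 A j).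
  move=> j; case: (hd j) => [[_ t1] [_ t2] [_ t3] [_ t4]]; apply: Enc_eq.
  by rewrite !tr_tens t1 t2 t3 t4.
rewrite /qcpa_prob.
set R1 := run_rounds h eta (adv_pre A) (adv_init A).
have S : \sum_j kapply (adv_inst j) R1 *t Enc h eta (@adv_Mo1 C d1 d2 A j *t @adv_Mc1 C d1 d2 A j)
   = \sum_j kapply (adv_inst j) R1 *t Enc h eta (@adv_Mo0 C d1 d2 A j *t @adv_Mc0 C d1 d2 A j).
  apply: eq_bigr => j _.
  rewrite (E j); exact: erefl.
clear E hd.
apply/eqP; rewrite normr_eq0 subr_eq0; apply/eqP.
exact: (congr1 (fun M => \tr (adv_F A *m run_rounds h eta (adv_post A) (kapply (adv_chal A) M))) S).
Qed.
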